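(* As $2$-cochains on $PSL(2,\mathbb{Z})$, $\delta\Phi=-12\,\delta(rot)$; that is, for all $g_1,g_2\in PSL(2,\mathbb{Z})$ and any lifts $\tilde g_1,\tilde g_2\in B_3$, $$\Phi(g_1)+\Phi(g_2)-\Phi(g_1g_2)=-12\big(rot(\tilde g_1)+rot(\tilde g_2)-rot(\tilde g_1\tilde g_2)\big).$$
   Context: $B_3$ is the braid group with standard generators $\sigma_1,\sigma_2$, mapped onto $PSL(2,\mathbb{Z})$ by $\sigma_1\mapsto \pm\begin{pmatrix}1&0\\-1&1\end{pmatrix}$, $\sigma_2\mapsto \pm\begin{pmatrix}1&1\\0&1\end{pmatrix}$ (kernel generated by $(\sigma_1\sigma_2\sigma_1)^2$); $\bar\sigma$ denotes the image. Rademacher function: with $A=\pm\begin{pmatrix}0&1\\-1&0\end{pmatrix}$, $B=\pm\begin{pmatrix}1&-1\\1&0\end{pmatrix}$, $PSL(2,\mathbb{Z})=\langle A\rangle *\langle B\rangle\cong\mathbb{Z}/2*\mathbb{Z}/3$, every $g$ is uniquely $B^{r_1}AB^{r_2}A\cdots AB^{r_k}$ with $r_1,r_k\in\{-1,0,1\}$ and $r_i\in\{-1,1\}$ otherwise; $\Phi(g)=\sum_i r_i$. Rotation number on $B_3$: for $g=\pm\begin{pmatrix}\alpha&\beta\\ \gamma&\delta\end{pmatrix}$ put $a=\gamma/\alpha$, $b=\delta/\beta\in\mathbb{Q}\cup\{\infty\}$ ($\infty$ read as $\pm\infty$ as needed). For $g=\bar\sigma$ one of the following holds, and $\sigma$ is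 written uniquely as $(\sigma_1\sigma_2\sigma_1)^k w$ accordingly: (1) $0\le a<b\le+\infty$: $k$ even, $w$ a word in $\sigma_1^{-1},\sigma_2$ only; (2) $-\infty\le a<b\le 0$: $k$ odd, $w$ a word in $\sigma_1^{-1},\sigma_2$; (3) $0\le b<a\le+\infty$: $k$ odd, $w$ a word in $\sigma_1,\sigma_2^{-1}$; (4) $-\infty\le b<a\le 0$: $k$ even, $w$ a word in $\sigma_1,\sigma_2^{-1}$. Then $rot(\sigma)=k/4$. The expression $rot(\tilde g_1)+rot(\tilde g_2)-rot(\tilde g_1\tilde g_2)$ does not depend on the choice of lifts. *)

(* Defs.v *)
From Stdlib Require Import ClassicalEpsilon.
From mathcomp Require Import all_boot all_order all_algebra.
Set Implicit Arguments. Unset Strict Implicit. Unset Printing Implicit Defensive.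
Import Order.TTheory GRing.Theory Num.Theory.
Local Open Scope ring_scope.

Definition mx2 (a b c d : int) : 'M[int]_2 :=
  \matrix_(i < 2, j < 2)
    if i == ord0 then (if j == ord0 then a else b) else (if j == ord0 then c else d).

Definition psl_eq (M N : 'M[int]_2) : Prop := M = N \/ M = - N.

Inductive gen := s1 | s2 | s1i | s2i.
Definition word := seq gen.

Inductive brel : word -> word -> Prop :=
  | br_11 : brel [:: s1; s1i] [::]
  | br_11' : brel [:: s1i; s1] [::]
  | br_22 : brel [:: s2; s2i] [::]
  | br_22' : brel [:: s2i; s2] [::]
  | br_braid : brel [:: s1; s2; s1] [:: s2; s1; s2].

Inductive beq : word -> word -> Prop :=
  | beq_step u x y v : brel x y -> beq (u ++ x ++ v) (u ++ y ++ v)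
  | beq_refl w : beq w w
  | beq_sym w w' : beq w w' -> beq w' w
  | beq_trans w1 w2 w3 : beq w1 w2 -> beq w2 w3 -> beq w1 w3.

(* the projection B_3 -> PSL(2,Z) (on representative matrices in SL(2,Z)) *)
Definition gen_mx (x : gen) : 'M[int]_2 :=
  match x with
  | s1 => mx2 1 0 (-1) 1
  | s2 => mx2 1 1 0 1
  | s1i => mx2 1 0 1 1
  | s2i => mx2 1 (-1) 0 1
  end.

Fixpoint word_mx (w : word) : 'M[int]_2 :=
  match w with
  | [::] => 1%:M
  | x :: w' => gen_mx x *m word_mx w'
  end.

Definition lifts (s : word) (g : 'M[int]_2) : Prop := psl_eq (word_mx s) g.

Definition matA : 'M[int]_2 := mx2 0 1 (-1) 0.
Definition matB : 'M[int]_2 := mx2 1 (-1) 1 0.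
Definition matBinv : 'M[int]_2 := mx2 0 1 (-1) 1.

Definition Bpow (r : int) : 'M[int]_2 :=
  if r == 1 then matB else if r == -1 then matBinv else 1%:M.

Fixpoint nf_mx (r : seq int) : 'M[int]_2 :=
  match r with
  | [::] => 1%:M
  | [:: x] => Bpow x
  | x :: r' => Bpow x *m matA *m nf_mx r'
  end.

Definition in_m101 (x : int) : bool := [|| x == -1, x == 0 | x == 1].
Definition in_pm1 (x : int) : bool := (x == -1) || (x == 1).

Definition nf_ok (r : seq int) : bool :=
  match r with
  | [::] => false
  | x :: r' => in_m101 x && in_m101 (last x r') && all in_pm1 (behead (belast x r'))
  end.

Definition is_nf (g : 'M[int]_2) (r : seq int) : Prop := nf_ok r /\ psl_eq (nf_mx r) g.

Definition Phi (g : 'M[int]_2) : int :=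
  \sum_(x <- epsilon (inhabits [::]) (is_nf g)) x.

Definition Delta : word := [:: s1; s2; s1].
Definition Delta_inv : word := [:: s1i; s2i; s1i].

Definition Delta_pow (k : int) : word :=
  match k with
  | Posz n => flatten (nseq n Delta)
  | Negz n => flatten (nseq n.+1 Delta_inv)
  end.

(* extended rationals Q u {oo}: None stands for oo *)
Definition ratio (num den : int) : option rat :=
  if den == 0 then None else Some (num%:~R / den%:~R).

(* a = gamma/alpha, b = delta/beta for g = +-[[alpha, beta],[gamma, delta]] *)
Definition ra (g : 'M[int]_2) : option rat := ratio (g ord_max ord0) (g ord0 ord0).
Definition rb (g : 'M[int]_2) : option rat := ratio (g ord_max ord_max) (g ord0 ord_max).

(* "oo read as +-oo as needed" *)
Definition case1 (a b : option rat) : bool :=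
  match a, b with
  | Some a, None => 0 <= a
  | Some a, Some b => (0 <= a) && (a < b)
  | _, _ => false
  end.
Definition case2 (a b : option rat) : bool :=
  match a, b with
  | None, Some b => b <= 0
  | Some a, Some b => (a < b) && (b <= 0)
  | _, _ => false
  end.
Definition case3 (a b : option rat) : bool := case1 b a.
Definition case4 (a b : option rat) : bool := case2 b a.

Definition pos_letters (w : word) : bool :=
  all (fun x => match x with s1i | s2 => true | _ => false end) w.
Definition neg_letters (w : word) : bool :=
  all (fun x => match x with s1 | s2i => true | _ => false end) w.

Definition rot_decomp (s : word) (kw : int * word) : Prop :=
  let: (k, w) := kw in
  let g := word_mx s in
  beq s (Delta_pow k ++ w) /\
  [\/ [&& case1 (ra g) (rb g), ~~ odd `|k|%N & pos_letters w],
      [&& case2 (ra g) (rb g), odd `|k|%N & pos_letters w],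
      [&& case3 (ra g) (rb g), odd `|k|%N & neg_letters w]
    | [&& case4 (ra g) (rb g), ~~ odd `|k|%N & neg_letters w]].

Definition braid_rot (s : word) : rat :=
  ((epsilon (inhabits (0%:Z, [::])) (rot_decomp s)).1)%:~R / 4.

(* Main.v *)
Require Import Defs.
From Stdlib Require Import ClassicalEpsilon.
From HB Require Import structures.
From mathcomp Require Import all_boot all_order all_algebra.
From mathcomp Require Import zify ring.
Set Implicit Arguments. Unset Strict Implicit. Unset Printing Implicit Defensive.
Import Order.TTheory GRing.Theory Num.Theory.
Local Open Scope ring_scope.

Record Q := mkQ { q1 : int; q2 : int; q3 : int; q4 : int }.
Definition mxq (p : Q) : 'M[int]_2 := mx2 (q1 p) (q2 p) (q3 p) (q4 p).
Definition qmul p q := mkQ (q1 p * q1 q + q2 p * q3 q) (q1 p * q2 q + q2 p * q4 q)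
  (q3 p * q1 q + q4 p * q3 q) (q3 p * q2 q + q4 p * q4 q).
Definition qneg p := mkQ (- q1 p) (- q2 p) (- q3 p) (- q4 p).
Definition qI := mkQ 1 0 0 1.

Lemma mxq_mul p q : mxq p *m mxq q = mxq (qmul p q).
Proof.
apply/matrixP => i j; rewrite !mxE big_ord_recl big_ord1 !mxE /=.
case: i => [[|[|i]] Hi] //; case: j => [[|[|j]] Hj] //=.
Qed.

Lemma mxq_neg p : - mxq p = mxq (qneg p).
Proof.
apply/matrixP => i j; rewrite !mxE /=.
case: i => [[|[|i]] Hi] //; case: j => [[|[|j]] Hj] //=.
Qed.

Lemma mxq_I : 1%:M = mxq qI.
Proof.
apply/matrixP => i j; rewrite !mxE /=.
case: i => [[|[|i]] Hi] //; case: j => [[|[|j]] Hj] //=.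
Qed.

Lemma mxq_inj p q : mxq p = mxq q -> p = q.
Proof.
case: p; case: q => ? ? ? ? ? ? ? ? H.
have H1 := congr1 (fun M : 'M[int]_2 => M ord0 ord0) H.
have H2 := congr1 (fun M : 'M[int]_2 => M ord0 ord_max) H.
have H3 := congr1 (fun M : 'M[int]_2 => M ord_max ord0) H.
have H4 := congr1 (fun M : 'M[int]_2 => M ord_max ord_max) H.
move: H1 H2 H3 H4; rewrite /mxq /mx2 !mxE /=.
by move=> -> -> -> ->.
Qed.

Lemma mxq_eta (M : 'M[int]_2) : M = mxq (mkQ (M ord0 ord0) (M ord0 ord_max) (M ord_max ord0) (M ord_max ord_max)).
Proof.
apply/matrixP => i j; rewrite !mxE /=.
case: i => [[|[|i]] Hi] //; case: j => [[|[|j]] Hj] //=; congr (M _ _); exact: val_inj.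
Qed.
Definition gq (x : gen) : Q :=
  match x with
  | s1 => mkQ 1 0 (-1) 1
  | s2 => mkQ 1 1 0 1
  | s1i => mkQ 1 0 1 1
  | s2i => mkQ 1 (-1) 0 1
  end.
Fixpoint wq (w : word) : Q := if w is x :: w' then qmul (gq x) (wq w') else qI.

Lemma qmulA p q r : qmul p (qmul q r) = qmul (qmul p q) r.
Proof. case: p q r => ? ? ? ? [? ? ? ?] [? ? ? ?]; rewrite /qmul /qneg /=; congr mkQ; ring. Qed.
Lemma qmul1 p : qmul qI p = p.
Proof. case: p => ? ? ? ?; rewrite /qmul /qneg /=; congr mkQ; ring. Qed.
Lemma qmulr1 p : qmul p qI = p.
Proof. case: p => ? ? ? ?; rewrite /qmul /qneg /=; congr mkQ; ring. Qed.
Lemma qmulN p q : qmul p (qneg q) = qneg (qmul p q).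
Proof. case: p q => ? ? ? ? [? ? ? ?]; rewrite /qmul /qneg /=; congr mkQ; ring. Qed.
Lemma qNmul p q : qmul (qneg p) q = qneg (qmul p q).
Proof. case: p q => ? ? ? ? [? ? ? ?]; rewrite /qmul /qneg /=; congr mkQ; ring. Qed.
Lemma qnegK p : qneg (qneg p) = p.
Proof. case: p => ? ? ? ?; rewrite /qneg /=; congr mkQ; ring. Qed.

Lemma word_mxE w : word_mx w = mxq (wq w).
Proof.
elim: w => [|x w IH] /=; first exact: mxq_I.
by rewrite IH -mxq_mul; case: x.
Qed.

Lemma wq_cat u v : wq (u ++ v) = qmul (wq u) (wq v).
Proof. elim: u => [|x u IH] /=; first by rewrite qmul1. by rewrite IH qmulA. Qed.

Fixpoint esum (w : word) : int :=
  if w is x :: w' then (match x with s1 | s2 => 1 | _ => -1 end) + esum w' else 0.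
Lemma esum_cat u v : esum (u ++ v) = esum u + esum v.
Proof. elim: u => [|x u IH] /=; first by rewrite add0r. by rewrite IH addrA. Qed.

Lemma brel_wq x y : brel x y -> wq x = wq y.
Proof. case => /=; rewrite /qmul /=; congr mkQ; done. Qed.
Lemma brel_esum x y : brel x y -> esum x = esum y.
Proof. by case. Qed.

Lemma beq_wq w w' : beq w w' -> wq w = wq w'.
Proof.
elim => [u x y v H|w0|? ? _ ->|? ? ? _ -> _ ->] //.
by rewrite !wq_cat (brel_wq H).
Qed.
Lemma beq_esum w w' : beq w w' -> esum w = esum w'.
Proof.
elim => [u x y v H|w0|? ? _ ->|? ? ? _ -> _ ->] //.
by rewrite !esum_cat (brel_esum H).
Qed.

Definition peq p q := p = q \/ p = qneg q.
Lemma peq_refl p : peq p p. Proof. by left. Qed.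
Lemma peq_sym p q : peq p q -> peq q p.
Proof. by case=> ->; [left|right; rewrite qnegK]. Qed.
Lemma peq_trans p q r : peq p q -> peq q r -> peq p r.
Proof. by case=> -> [] ->; [left|right|right|left; rewrite qnegK]. Qed.
Lemma peq_mul p p' q q' : peq p p' -> peq q q' -> peq (qmul p q) (qmul p' q').
Proof. by case=> -> [] ->; rewrite ?qmulN ?qNmul ?qnegK; [left|right|right|left]. Qed.

Lemma psl_peq p q : psl_eq (mxq p) (mxq q) <-> peq p q.
Proof.
split; first by case=> [/mxq_inj|]; [left|rewrite mxq_neg => /mxq_inj; right].
by case=> ->; [left|right; rewrite mxq_neg].
Qed.
Definition gen_code (x : gen) : nat := match x with s1 => 0 | s2 => 1 | s1i => 2 | s2i => 3 end%N.
Definition gen_decode (n : nat) : gen := match n with 0 => s1 | 1 => s2 | 2 => s1i | _ => s2i end%N.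
Lemma gen_codeK : cancel gen_code gen_decode. Proof. by case. Qed.
HB.instance Definition _ := Equality.copy gen (can_type gen_codeK).

Definition rels : seq (word * word) :=
  [:: ([:: s1; s1i], [::]); ([:: s1i; s1], [::]); ([:: s2; s2i], [::]); ([:: s2i; s2], [::]);
      ([:: s1; s2; s1], [:: s2; s1; s2])].
Lemma rels_brel x y : (x, y) \in rels -> brel x y.
Proof.
rewrite !inE => H.
repeat (case/orP: H => [/eqP [-> ->]|H]; first by constructor).
by move/eqP: H => [-> ->]; constructor.
Qed.

Definition step_at (a b x y : word) (i : nat) : bool :=
  (take (size x) (drop i a) == x) && (b == take i a ++ y ++ drop (i + size x) a).
Definition step_ok (a b : word) : bool :=
  has (fun i => has (fun xy => step_at a b xy.1 xy.2 i || step_at b a xy.1 xy.2 i) rels)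
      (iota 0 (size a + size b).+1).

Lemma step_at_beq a b x y i : brel x y -> step_at a b x y i -> beq a b.
Proof.
move=> Hr /andP [/eqP Hx /eqP ->].
have Ha : a = take i a ++ x ++ drop (i + size x) a.
  by rewrite -[in LHS](cat_take_drop i a) -[drop i a](cat_take_drop (size x)) Hx drop_drop addnC.
rewrite [X in beq X _]Ha; exact: beq_step.
Qed.

Lemma step_ok_beq a b : step_ok a b -> beq a b.
Proof.
move=> /hasP [i _ /hasP [[x y] /rels_brel Hr /= /orP []]] H.
  exact: step_at_beq Hr H.
apply: beq_sym; exact: step_at_beq Hr H.
Qed.

Fixpoint chain_ok (a : word) (p : seq word) : bool :=
  if p is b :: p' then step_ok a b && chain_ok b p' else true.
Lemma chain_beq a p b : chain_ok a p -> last a p == b -> beq a b.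
Proof.
elim: p a => [|c p IH] a /=; first by move=> _ /eqP ->; exact: beq_refl.
by move=> /andP [H1 H2] H3; apply: beq_trans (step_ok_beq H1) (IH _ H2 H3).
Qed.
Lemma E1 : beq [:: s1i; s2i] [:: s1i; s2i; s1i; s1].
Proof. by apply: (@chain_beq _ [:: [:: s1i; s2i; s1i; s1]]). Qed.

Lemma E2 : beq [:: s2; s1] [:: s1; s2; s1; s2i].
Proof. by apply: (@chain_beq _ [:: [:: s2; s1; s2; s2i]; [:: s1; s2; s1; s2i]]). Qed.

Lemma E3 : beq [:: s1; s2] [:: s1; s2; s1; s1i].
Proof. by apply: (@chain_beq _ [:: [:: s1; s2; s1; s1i]]). Qed.

Lemma E4 : beq [:: s2i; s1i] [:: s1i; s2i; s1i; s2].
Proof. by apply: (@chain_beq _ [:: [:: s1i; s1; s2i; s1i]; [:: s1i; s2i; s2; s1; s2i; s1i]; [:: s1i; s2i; s1i; s1; s2; s1; s2i; s1i]; [:: s1i; s2i; s1i; s2; s1; s2; s2i; s1i]; [:: s1i; s2i; s1i; s2; s1; s1i]; [:: s1i; s2i; s1i; s2]]). Qed.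

Lemma D_a : beq [:: s1; s1; s2; s1] [:: s1; s2; s1; s2].
Proof. by apply: (@chain_beq _ [:: [:: s1; s2; s1; s2]]). Qed.

Lemma Di_a : beq [:: s1; s1i; s2i; s1i] [:: s1i; s2i; s1i; s2].
Proof. by apply: (@chain_beq _ [:: [:: s2i; s1i]; [:: s1i; s1; s2i; s1i]; [:: s1i; s2i; s2; s1; s2i; s1i]; [:: s1i; s2i; s1i; s1; s2; s1; s2i; s1i]; [:: s1i; s2i; s1i; s2; s1; s2; s2i; s1i]; [:: s1i; s2i; s1i; s2; s1; s1i]; [:: s1i; s2i; s1i; s2]]). Qed.

Lemma D_b : beq [:: s2; s1; s2; s1] [:: s1; s2; s1; s1].
Proof. by apply: (@chain_beq _ [:: [:: s1; s2; s1; s1]]). Qed.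

Lemma Di_b : beq [:: s2; s1i; s2i; s1i] [:: s1i; s2i; s1i; s1].
Proof. by apply: (@chain_beq _ [:: [:: s1i; s1; s2; s1i; s2i; s1i]; [:: s1i; s1; s2; s1i; s2i; s1i; s1i; s1]; [:: s1i; s2i; s2; s1; s2; s1i; s2i; s1i; s1i; s1]; [:: s1i; s2i; s1; s2; s1; s1i; s2i; s1i; s1i; s1]; [:: s1i; s2i; s1; s2; s2i; s1i; s1i; s1]; [:: s1i; s2i; s1; s1i; s1i; s1]; [:: s1i; s2i; s1i; s1]]). Qed.

Lemma D_A : beq [:: s1i; s1; s2; s1] [:: s1; s2; s1; s2i].
Proof. by apply: (@chain_beq _ [:: [:: s2; s1]; [:: s2; s1; s2; s2i]; [:: s1; s2; s1; s2i]]). Qed.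

Lemma Di_A : beq [:: s1i; s1i; s2i; s1i] [:: s1i; s2i; s1i; s2i].
Proof. by apply: (@chain_beq _ [:: [:: s1i; s1i; s2i; s1i; s2; s2i]; [:: s1i; s1i; s2i; s1i; s2; s1; s1i; s2i]; [:: s1i; s1i; s2i; s1i; s2; s1; s2; s2i; s1i; s2i]; [:: s1i; s1i; s2i; s1i; s1; s2; s1; s2i; s1i; s2i]; [:: s1i; s1i; s2i; s2; s1; s2i; s1i; s2i]; [:: s1i; s1i; s1; s2i; s1i; s2i]; [:: s1i; s2i; s1i; s2i]]). Qed.

Lemma D_B : beq [:: s2i; s1; s2; s1] [:: s1; s2; s1; s1i].
Proof. by apply: (@chain_beq _ [:: [:: s2i; s1; s2; s1; s1; s1i]; [:: s2i; s2; s1; s2; s1; s1i]; [:: s1; s2; s1; s1i]]). Qed.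

Lemma Di_B : beq [:: s2i; s1i; s2i; s1i] [:: s1i; s2i; s1i; s1i].
Proof. by apply: (@chain_beq _ [:: [:: s2i; s1i; s2i; s1; s1i; s1i]; [:: s2i; s1i; s2i; s1; s2; s2i; s1i; s1i]; [:: s2i; s1i; s2i; s1; s2; s1; s1i; s2i; s1i; s1i]; [:: s2i; s1i; s2i; s2; s1; s2; s1i; s2i; s1i; s1i]; [:: s2i; s1i; s1; s2; s1i; s2i; s1i; s1i]; [:: s2i; s2; s1i; s2i; s1i; s1i]; [:: s1i; s2i; s1i; s1i]]). Qed.

Lemma DiD : beq [:: s1i; s2i; s1i; s1; s2; s1] [::].
Proof. by apply: (@chain_beq _ [:: [:: s1i; s2i; s2; s1]; [:: s1i; s1]; [::]]). Qed.

Lemma DDi : beq [:: s1; s2; s1; s1i; s2i; s1i] [::].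
Proof. by apply: (@chain_beq _ [:: [:: s1; s2; s2i; s1i]; [:: s1; s1i]; [::]]). Qed.

Lemma beq_catl p w w' : beq w w' -> beq (p ++ w) (p ++ w').
Proof.
elim => [u x y v H|w0|? ? _ H|? ? ? _ H1 _ H2].
- by have := beq_step (p ++ u) v H; rewrite -!catA.
- exact: beq_refl.
- exact: beq_sym.
- exact: beq_trans H1 H2.
Qed.
Lemma beq_catr q w w' : beq w w' -> beq (w ++ q) (w' ++ q).
Proof.
elim => [u x y v H|w0|? ? _ H|? ? ? _ H1 _ H2].
- by have := beq_step u (v ++ q) H; rewrite -!catA.
- exact: beq_refl.
- exact: beq_sym.
- exact: beq_trans H1 H2.
Qed.
Lemma beq_cat u u' v v' : beq u u' -> beq v v' -> beq (u ++ v) (u' ++ v').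
Proof. move=> H1 H2; apply: beq_trans (beq_catr _ H1) (beq_catl _ H2). Qed.

Definition tau (x : gen) : gen := match x with s1 => s2 | s2 => s1 | s1i => s2i | s2i => s1i end.
Lemma tauK : involutive tau. Proof. by case. Qed.

Lemma flatten_nseq_comm n (X : word) : flatten (nseq n X) ++ X = X ++ flatten (nseq n X).
Proof. elim: n => [|n IH] /=; first by rewrite cats0. by rewrite -catA IH. Qed.

Lemma block_comm (X : word) (HX : forall z, beq (z :: X) (X ++ [:: tau z])) n z :
  beq (z :: flatten (nseq n X)) (flatten (nseq n X) ++ [:: iter n tau z]).
Proof.
elim: n z => [|n IH] z /=; first exact: beq_refl.
apply: beq_trans (beq_catr _ (HX z)) _; rewrite -!catA /=.
apply: beq_catl; apply: beq_trans (IH _) _.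
by rewrite -iterSr /=; exact: beq_refl.
Qed.

Lemma HD z : beq (z :: Delta) (Delta ++ [:: tau z]).
Proof. case: z; [exact: D_a|exact: D_b|exact: D_A|exact: D_B]. Qed.
Lemma HDi z : beq (z :: Delta_inv) (Delta_inv ++ [:: tau z]).
Proof. case: z; [exact: Di_a|exact: Di_b|exact: Di_A|exact: Di_B]. Qed.

Lemma iter_tau n z : iter n tau z = if odd n then tau z else z.
Proof. elim: n => [|n IH] //=; rewrite IH; case: (odd n) => //=; exact: tauK. Qed.

Definition taun (k : int) z := if odd `|k|%N then tau z else z.

Lemma Delta_comm k z : beq (z :: Delta_pow k) (Delta_pow k ++ [:: taun k z]).
Proof.
rewrite /taun; case: k => n.
- have -> : `|Posz n|%N = n by [].
  rewrite -iter_tau; exact: (block_comm HD).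
- have -> : `|Negz n|%N = n.+1 by [].
  rewrite -iter_tau; exact: (block_comm HDi n.+1).
Qed.

Lemma Delta_succ k : beq (Delta_pow k ++ Delta) (Delta_pow (k + 1)).
Proof.
case: k => n.
- have -> : (Posz n + 1 = Posz n.+1)%R by rewrite -addn1 PoszD.
  rewrite /= flatten_nseq_comm; exact: beq_refl.
- case: n => [|m].
  + have -> : (Negz 0 + 1 = Posz 0)%R by [].
    exact: DiD.
  + have -> : (Negz m.+1 + 1 = Negz m)%R by rewrite !NegzE; lia.
    have -> : Delta_pow (Negz m.+1) = Delta_pow (Negz m) ++ Delta_inv by rewrite /= flatten_nseq_comm.
    rewrite -catA -[X in beq _ X]cats0.
    apply: beq_catl; exact: DiD.
Qed.

Lemma Delta_pred k : beq (Delta_pow k ++ Delta_inv) (Delta_pow (k - 1)).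
Proof.
case: k => n.
- case: n => [|m].
  + have -> : (Posz 0 - 1 = Negz 0)%R by [].
    exact: beq_refl.
  + have -> : (Posz m.+1 - 1 = Posz m)%R by lia.
    have -> : Delta_pow (Posz m.+1) = Delta_pow (Posz m) ++ Delta by rewrite /= flatten_nseq_comm.
    rewrite -catA -[X in beq _ X]cats0.
    apply: beq_catl; exact: DDi.
- have -> : (Negz n - 1 = Negz n.+1)%R by rewrite !NegzE; lia.
  rewrite /Delta_pow flatten_nseq_comm; exact: beq_refl.
Qed.

Definition PN (w : word) := pos_letters w || neg_letters w.

Lemma stepD a b k w : beq a (Delta ++ b) -> beq (Delta_pow k ++ a ++ w) (Delta_pow (k + 1) ++ b ++ w).
Proof.
move=> H; apply: beq_trans (beq_catl _ (beq_catr w H)) _.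
rewrite -!catA catA; apply: beq_catr; exact: Delta_succ.
Qed.
Lemma stepDi a b k w : beq a (Delta_inv ++ b) -> beq (Delta_pow k ++ a ++ w) (Delta_pow (k - 1) ++ b ++ w).
Proof.
move=> H; apply: beq_trans (beq_catl _ (beq_catr w H)) _.
rewrite -!catA catA; apply: beq_catr; exact: Delta_pred.
Qed.
Lemma stepC x y k w : brel [:: x; y] [::] -> beq (Delta_pow k ++ x :: y :: w) (Delta_pow k ++ w).
Proof. move=> H; apply: beq_catl; exact: (beq_step [::] w H). Qed.

Lemma step_ex k z w : PN w -> exists k' w', beq (Delta_pow k ++ z :: w) (Delta_pow k' ++ w') /\ PN w'.
Proof.
case: w => [|y w] HP.
  by exists k, [:: z]; split; [exact: beq_refl|case: z].
have HPt : PN w by move: HP; rewrite /PN /=; case: y => /=; rewrite ?orbF => ->; rewrite ?orbT.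
case: z; case: y HP => HP;
  try (by exists k, [:: s1, s1i & w]; split; [exact: beq_refl|]);
  try (by exists k, [:: s1, s2i & w]; split; [exact: beq_refl|]);
  try (by exists k, [:: s2i, s1 & w]; split; [exact: beq_refl|]);
  try (by exists k, [:: s2i, s2i & w]; split; [exact: beq_refl|]);
  try (by exists k, [:: s1, s1 & w]; split; [exact: beq_refl|]);
  try (by exists k, [:: s1i, s1i & w]; split; [exact: beq_refl|]);
  try (by exists k, [:: s1i, s2 & w]; split; [exact: beq_refl|]);
  try (by exists k, [:: s2, s1i & w]; split; [exact: beq_refl|]);
  try (by exists k, [:: s2, s2 & w]; split; [exact: beq_refl|]);
  try (by exists k, w; split; [apply: stepC; constructor|]).
- exists (k + 1), (s1i :: w); split; first by apply: (stepD (a := [:: s1; s2]) (b := [:: s1i])); exact: E3.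
  by move: HP; rewrite /PN /=.
- exists (k + 1), (s2i :: w); split; first by apply: (stepD (a := [:: s2; s1]) (b := [:: s2i])); exact: E2.
  by move: HP; rewrite /PN /=.
- exists (k - 1), (s1 :: w); split; first by apply: (stepDi (a := [:: s1i; s2i]) (b := [:: s1])); exact: E1.
  by move: HP; rewrite /PN /=.
- exists (k - 1), (s2 :: w); split; first by apply: (stepDi (a := [:: s2i; s1i]) (b := [:: s2])); exact: E4.
  by move: HP; rewrite /PN /=.
Qed.

Lemma decomp_ex s : exists k w, beq s (Delta_pow k ++ w) /\ PN w.
Proof.
elim: s => [|z s [k [w [H HP]]]]; first by exists 0, [::]; split; [exact: beq_refl|].
have [k' [w' [H1 H2]]] := step_ex k (taun k z) HP.
exists k', w'; split => //.
apply: beq_trans (beq_catl [:: z] H) _.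
apply: beq_trans (beq_catr w (Delta_comm k z)) _.
by rewrite -catA.
Qed.

Definition qdet p := q1 p * q4 p - q2 p * q3 p.
Lemma qdet_mul p q : qdet (qmul p q) = qdet p * qdet q.
Proof. case: p q => ? ? ? ? [? ? ? ?]; rewrite /qdet /qmul /=; ring. Qed.
Lemma qdet_wq w : qdet (wq w) = 1.
Proof. elim: w => [|x w IH] //=; rewrite qdet_mul IH mulr1; case: x => //. Qed.

Lemma Pform w : pos_letters w -> exists a b c d, wq w = mkQ a b c d /\
  [/\ 1 <= a, 0 <= b, 0 <= c & 1 <= d].
Proof.
elim: w => [|x w IH] /=; first by exists 1, 0, 0, 1.
case: x => //= /IH [a [b [c [d [-> [Ha Hb Hc Hd]]]]]]; rewrite /qmul /=.
- exists (a + c), (b + d), c, d; split; [congr mkQ; lia|split; lia].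
- exists a, b, (a + c), (b + d); split; [congr mkQ; lia|split; lia].
Qed.

Lemma Nform w : neg_letters w -> exists a b c d, wq w = mkQ a (- b) (- c) d /\
  [/\ 1 <= a, 0 <= b, 0 <= c & 1 <= d].
Proof.
elim: w => [|x w IH] /=; first by exists 1, 0, 0, 1; split; [congr mkQ|].
case: x => //= /IH [a [b [c [d [-> [Ha Hb Hc Hd]]]]]]; rewrite /qmul /=.
- exists a, b, (a + c), (b + d); split; [congr mkQ; lia|split; lia].
- exists (a + c), (b + d), c, d; split; [congr mkQ; lia|split; lia].
Qed.

Lemma Pinj w1 w2 : pos_letters w1 -> pos_letters w2 -> wq w1 = wq w2 -> w1 = w2.
Proof.
elim: w1 w2 => [|x w1 IH] [|y w2] //=.
- move=> _; case: y => //= /Pform [a [b [c [d [-> [Ha Hb Hc Hd]]]]]]; rewrite /qmul /= => -[]; lia.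
- case: x => //= /Pform [a [b [c [d [-> [Ha Hb Hc Hd]]]]]] _; rewrite /qmul /= => -[]; lia.
- move=> Hx Hy; have P1 : pos_letters w1 by case: x Hx.
  have P2 : pos_letters w2 by case: y Hy.
  have [a [b [c [d [E1 [Ha Hb Hc Hd]]]]]] := Pform P1.
  have [a' [b' [c' [d' [E2 [Ha' Hb' Hc' Hd']]]]]] := Pform P2.
  case: x Hx => //= _; case: y Hy => //= _; rewrite E1 E2 /qmul /= => -[] *;
    try (exfalso; lia); congr cons; apply: IH => //; rewrite E1 E2; congr mkQ; lia.
Qed.

Lemma Ninj w1 w2 : neg_letters w1 -> neg_letters w2 -> wq w1 = wq w2 -> w1 = w2.
Proof.
elim: w1 w2 => [|x w1 IH] [|y w2] //=.
- move=> _; case: y => //= /Nform [a [b [c [d [-> [Ha Hb Hc Hd]]]]]]; rewrite /qmul /= => -[]; lia.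
- case: x => //= /Nform [a [b [c [d [-> [Ha Hb Hc Hd]]]]]] _; rewrite /qmul /= => -[]; lia.
- move=> Hx Hy; have P1 : neg_letters w1 by case: x Hx.
  have P2 : neg_letters w2 by case: y Hy.
  have [a [b [c [d [E1 [Ha Hb Hc Hd]]]]]] := Nform P1.
  have [a' [b' [c' [d' [E2 [Ha' Hb' Hc' Hd']]]]]] := Nform P2.
  case: x Hx => //= _; case: y Hy => //= _; rewrite E1 E2 /qmul /= => -[] *;
    try (exfalso; lia); congr cons; apply: IH => //; rewrite E1 E2; congr mkQ; lia.
Qed.

Definition qA := mkQ 0 1 (-1) 0.
Definition apw (b : bool) p := if b then qmul qA p else p.

Lemma PN_form w : PN w -> (pos_letters w /\ exists a b c d, wq w = mkQ a b c d /\
  [/\ 1 <= a, 0 <= b, 0 <= c & 1 <= d]) \/ (neg_letters w /\ exists a b c d, wq w = mkQ a (- b) (- c) d /\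
  [/\ 1 <= a, 0 <= b, 0 <= c & 1 <= d]).
Proof. by case/orP=> H; [left; split => //; exact: Pform|right; split => //; exact: Nform]. Qed.

Lemma Key b1 b2 w1 w2 : PN w1 -> PN w2 -> peq (apw b1 (wq w1)) (apw b2 (wq w2)) -> esum w1 = esum w2.
Proof.
move=> H1 H2 H.
have D1 := qdet_wq w1; have D2 := qdet_wq w2.
suff : w1 = w2 \/ (w1 = [::] /\ w2 = [::]) by case=> [->|[-> ->]].
case: (PN_form H1) => [[P1 [a [b [c [d [E1 [Ha Hb Hc Hd]]]]]]]|[P1 [a [b [c [d [E1 [Ha Hb Hc Hd]]]]]]]];
case: (PN_form H2) => [[P2 [a' [b' [c' [d' [E2 [Ha' Hb' Hc' Hd']]]]]]]|[P2 [a' [b' [c' [d' [E2 [Ha' Hb' Hc' Hd']]]]]]]];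
rewrite E1 /qdet /= in D1; rewrite E2 /qdet /= in D2;
case: b1 H; case: b2; rewrite /apw E1 E2 /qmul /qneg /=; case=> -[] *; try (exfalso; lia);
first [ left; apply: Pinj => //; rewrite E1 E2; congr mkQ; lia
      | left; apply: Ninj => //; rewrite E1 E2; congr mkQ; lia
      | right; split; [apply: (@Pinj _ [::]) => //; rewrite E1; congr mkQ; nia
                      |apply: (@Ninj _ [::]) => //; rewrite E2; congr mkQ; nia]
      | right; split; [apply: (@Ninj _ [::]) => //; rewrite E1; congr mkQ; nia
                      |apply: (@Pinj _ [::]) => //; rewrite E2; congr mkQ; nia] ].
Qed.

Definition Bq (x : int) : Q :=
  if x == 1 then mkQ 1 (-1) 1 0 else if x == -1 then mkQ 0 1 (-1) 1 else qI.
Fixpoint nfq (r : seq int) : Q :=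
  match r with
  | [::] => qI
  | [:: x] => Bq x
  | x :: r' => qmul (qmul (Bq x) qA) (nfq r')
  end.

Lemma Bpow_mx x : Bpow x = mxq (Bq x).
Proof. rewrite /Bpow /Bq; case: ifP => _; first by []. case: ifP => _; first by []. exact: mxq_I. Qed.

Lemma nf_mxE r : nf_mx r = mxq (nfq r).
Proof.
elim: r => [|x [|y r] IH]; first exact: mxq_I.
  exact: Bpow_mx.
rewrite -[nf_mx (x :: y :: r)]/(Bpow x *m matA *m nf_mx (y :: r)) IH Bpow_mx -[matA]/(mxq qA) !mxq_mul //.
Qed.

Lemma nfq_cons x r : r != [::] -> nfq (x :: r) = qmul (qmul (Bq x) qA) (nfq r).
Proof. by case: r. Qed.

Definition Lz (x : int) : word := if x == 1 then [:: s2] else if x == -1 then [:: s1i] else [::].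
Definition U (r : seq int) : word := flatten (map Lz r).

Lemma U_cons x r : U (x :: r) = Lz x ++ U r. Proof. by []. Qed.

Ltac qsolve := rewrite /peq /qmul /qneg /qA /=;
  first [left; congr mkQ; lia | right; congr mkQ; lia | left; reflexivity | right; reflexivity].

Lemma Bq_form y : in_m101 y -> peq (Bq y) (qmul (wq (Lz y)) (apw (y != 0) qI)).
Proof. by case/or3P => /eqP ->; qsolve. Qed.

Lemma BA_form x : in_pm1 x -> peq (qmul (Bq x) qA) (wq (Lz x)).
Proof. by case/orP => /eqP ->; qsolve. Qed.

Lemma tail_form m y : all in_pm1 m -> in_m101 y ->
  peq (nfq (rcons m y)) (qmul (wq (U (rcons m y))) (apw (y != 0) qI)).
Proof.
move=> Hm Hy; elim: m Hm => [|z m IH].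
  by move=> _; rewrite /U /= cats0; exact: Bq_form.
rewrite rcons_cons [all _ _]/= => /andP [Hz Hm].
rewrite nfq_cons; last by case: (m).
rewrite U_cons wq_cat -(qmulA (wq (Lz z))).
exact: peq_mul (BA_form Hz) (IH Hm).
Qed.

Lemma fin_form x m y : in_m101 x -> all in_pm1 m -> in_m101 y ->
  peq (nfq (x :: rcons m y)) (qmul (apw (x == 0) (wq (U (x :: rcons m y)))) (apw (y != 0) qI)).
Proof.
move=> Hx Hm Hy.
rewrite nfq_cons; last by case: (m).
have HT := tail_form Hm Hy.
have [Hx0|Hx0] := eqVneq x 0.
- rewrite Hx0 U_cons.
  have -> : Bq 0 = qI by [].
  have -> : Lz 0 ++ U (rcons m y) = U (rcons m y) by [].
  rewrite qmul1 /apw -qmulA; exact: peq_mul (peq_refl _) HT.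
- have Hp : in_pm1 x by move: Hx Hx0; rewrite /in_m101 /in_pm1; case/or3P => /eqP ->.
  rewrite /apw U_cons wq_cat -(qmulA (wq (Lz x))).
  exact: peq_mul (BA_form Hp) HT.
Qed.


Lemma wq_tau u : qmul (wq u) qA = qmul qA (wq (map tau u)).
Proof.
elim: u => [|x u IH] /=; first by rewrite qmul1 qmulr1.
rewrite -qmulA IH !qmulA; congr qmul.
by case: x; rewrite /qmul /=; congr mkQ.
Qed.

Lemma qAA : qmul qA qA = qneg qI. Proof. by rewrite /qmul /=; congr mkQ. Qed.

Lemma esum_tau u : esum (map tau u) = esum u.
Proof. by elim: u => [|x u IH] //=; rewrite IH; case: x. Qed.

Lemma neg_tau u : pos_letters u -> neg_letters (map tau u).
Proof. by elim: u => [|x u IH] //=; case: x => //=. Qed.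

Lemma pos_U r : pos_letters (U r).
Proof.
elim: r => [|x r IH] //; move: IH; rewrite U_cons /pos_letters all_cat => ->; rewrite andbT /Lz.
by case: ifP => _ //; case: ifP.
Qed.

Lemma sum_U r : all in_m101 r -> \sum_(x <- r) x = esum (U r).
Proof.
elim: r => [|x r IH]; first by rewrite big_nil.
rewrite /= big_cons U_cons esum_cat => /andP [Hx /IH ->]; congr (_ + _).
by case/or3P: Hx => /eqP ->.
Qed.

Lemma shape c d u : pos_letters u -> exists b v, PN v /\
  peq (qmul (apw c (wq u)) (apw d qI)) (apw b (wq v)) /\ esum v = esum u.
Proof.
move=> Hu; case: d.
- case: c.
  + exists false, (map tau u); split; first by rewrite /PN neg_tau ?orbT.
    split; last exact: esum_tau.
    rewrite /apw qmulr1 -qmulA wq_tau qmulA qAA qNmul qmul1; right; by [].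
  + exists true, (map tau u); split; first by rewrite /PN neg_tau ?orbT.
    split; last exact: esum_tau.
    rewrite /apw qmulr1 wq_tau; exact: peq_refl.
- exists c, u; split; first by rewrite /PN Hu.
  by split => //; rewrite /apw qmulr1; exact: peq_refl.
Qed.

Lemma nf_form r : nf_ok r -> exists b v, PN v /\ peq (nfq r) (apw b (wq v)) /\
  \sum_(x <- r) x = esum v.
Proof.
case: r => [|x r'] //; case/lastP: r' => [|m y].
- rewrite /nf_ok /= andbT andbb => Hx.
  have [b [v [H1 [H2 H3]]]] := shape false (x != 0) (pos_U [:: x]).
  exists b, v; split => //; split.
    apply: peq_trans H2; rewrite /apw; have := Bq_form Hx; by rewrite /U /= cats0.
  by rewrite H3 -sum_U //= Hx.
- rewrite /nf_ok last_rcons belast_rcons /= => /andP [/andP [Hx Hy] Hm].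
  have [b [v [H1 [H2 H3]]]] := shape (x == 0) (y != 0) (pos_U (x :: rcons m y)).
  exists b, v; split => //; split.
    exact: peq_trans (fin_form Hx Hm Hy) H2.
  rewrite H3 -sum_U //= Hx all_rcons Hy /=.
  by apply/allP => z /(allP Hm); rewrite /in_pm1 /in_m101 => /orP [] ->; rewrite ?orbT.
Qed.

Definition eps (z : gen) : int := if z is s1i then -1 else 1.

Lemma U_rcons m y : U (rcons m y) = U m ++ Lz y.
Proof. by rewrite /U map_rcons flatten_rcons. Qed.

Lemma U_eps w : pos_letters w -> U (map eps w) = w.
Proof. by elim: w => [|z w IH] //=; case: z => //= /IH; rewrite U_cons => ->. Qed.

Lemma all_eps w : all in_pm1 (map eps w).
Proof. by elim: w => [|z w IH] //=; rewrite IH andbT; case: z. Qed.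

Lemma nf_ok_cons x m y : nf_ok (x :: rcons m y) = [&& in_m101 x, in_m101 y & all in_pm1 m].
Proof. by rewrite /nf_ok last_rcons belast_rcons /= andbA. Qed.

Lemma nf_ex_pos b w : pos_letters w -> exists r, nf_ok r /\ peq (nfq r) (apw b (wq w)).
Proof.
move=> Hw; case: b.
- exists (0 :: rcons (map eps w) 0); split; first by rewrite nf_ok_cons all_eps.
  apply: peq_trans (fin_form _ (all_eps w) _) _ => //.
  rewrite U_cons U_rcons U_eps // /= cats0 qmulr1; exact: peq_refl.
- case: w Hw => [|z w] Hw; first by exists [:: 0]; split => //; exact: peq_refl.
  exists (eps z :: rcons (map eps w) 0); split.
    by rewrite nf_ok_cons all_eps andbT; case: (z).
  have Hw' : pos_letters w by case: z Hw.
  have Hz : in_m101 (eps z) by case: (z).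
  apply: peq_trans (fin_form Hz (all_eps w) _) _ => //.
  have -> : (eps z == 0) = false by case: (z).
  rewrite U_cons U_rcons U_eps // /= cats0 qmulr1.
  by case: z Hw Hz => //= _ _; exact: peq_refl.
Qed.

Lemma nf_ex b w : PN w -> exists r, nf_ok r /\ peq (nfq r) (apw b (wq w)).
Proof.
case/orP => [|Hn]; first exact: nf_ex_pos.
case: (boolP (pos_letters w)) => [|Hp]; first exact: nf_ex_pos.
set u := map tau w.
have Hu : pos_letters u.
  move: Hn; rewrite /u; elim: (w) => [|z w' IH] //=; case: z => //=.
have Ew : w = map tau u by rewrite /u -map_comp map_id_in // => z _ /=; rewrite tauK.
have Hne : u != [::] by move: Hp; rewrite Ew; case: (u).
have Key1 : qmul (wq u) qA = qmul qA (wq w) by rewrite wq_tau -Ew.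
clearbody u; clear Ew; move: Hne Hu Key1; case/lastP: u => [|u' z] // _ Hu Key1.
have [Hz Hu'] : pos_letters [:: z] /\ pos_letters u'.
  by move: Hu; rewrite /pos_letters all_rcons /= andbT => /andP [].
have Hez : in_m101 (eps z) by case: (z).
have Hez0 : (eps z != 0) = true by case: (z).
have Lze : Lz (eps z) = [:: z] by move: Hz; case: (z).
case: b.
- case: u' Hu Hu' Key1 => [|z0 u''] Hu Hu' Key1.
  + exists [:: eps z]; split; first by rewrite /nf_ok /= Hez.
    apply: peq_trans (Bq_form Hez) _; rewrite Hez0 Lze /apw qmulr1 /=.
    rewrite -Key1 /=; exact: peq_refl.
  + have Hz0 : in_m101 (eps z0) by case: (z0).
    exists (eps z0 :: rcons (map eps u'') (eps z)); split.
      by rewrite nf_ok_cons Hz0 Hez all_eps.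
    apply: peq_trans (fin_form Hz0 (all_eps u'') Hez) _.
    have -> : (eps z0 == 0) = false by case: (z0).
    have Hu'' : pos_letters u'' by move: Hu'; case: (z0).
    rewrite Hez0 U_cons U_rcons U_eps // Lze /apw qmulr1.
    have -> : Lz (eps z0) = [:: z0] by move: Hu'; case: (z0).
    by rewrite -Key1 -cats1; exact: peq_refl.
- exists (0 :: rcons (map eps u') (eps z)); split; first by rewrite nf_ok_cons Hez all_eps.
  apply: peq_trans (fin_form _ (all_eps u') Hez) _ => //.
  rewrite Hez0 U_cons U_rcons U_eps // Lze /apw qmulr1 /=.
  rewrite cats1 -qmulA Key1 qmulA qAA qNmul qmul1; right; by [].
Qed.


Lemma lt_frac (c a d b : int) : 0 < a -> 0 < b -> c * b < d * a ->
  (c%:~R / a%:~R : rat) < d%:~R / b%:~R.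
Proof.
move=> Ha Hb H.
rewrite ltr_pdivrMr ?ltr0z // mulrAC ltr_pdivlMr ?ltr0z // -!intrM ltr_int //.
Qed.
Lemma ge0_frac (c a : int) : 0 <= c -> 0 < a -> (0 : rat) <= c%:~R / a%:~R.
Proof. by move=> Hc Ha; apply: divr_ge0; rewrite ler0z // ltW. Qed.
Lemma le0_frac (c a : int) : c <= 0 -> 0 < a -> (c%:~R / a%:~R : rat) <= 0.
Proof.
move=> Hc Ha; rewrite ler_pdivrMr ?ltr0z // mul0r lerz0 //.
Qed.

Lemma ratioN (n d : int) : Defs.ratio (- n) (- d) = Defs.ratio n d.
Proof.
rewrite /Defs.ratio oppr_eq0; case: ifP => // _.
by rewrite !intrN invrN mulrNN.
Qed.
Lemma ratio_some (n d : int) : d != 0 -> Defs.ratio n d = Some (n%:~R / d%:~R).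
Proof. by rewrite /Defs.ratio => /negbTE ->. Qed.

Lemma ratio0 (n : int) : Defs.ratio n 0 = None. Proof. by []. Qed.

Lemma ra_mxq p : ra (mxq p) = Defs.ratio (q3 p) (q1 p).
Proof. by rewrite /ra /mxq /mx2 !mxE. Qed.
Lemma rb_mxq p : rb (mxq p) = Defs.ratio (q4 p) (q2 p).
Proof. by rewrite /rb /mxq /mx2 !mxE. Qed.

Lemma apw_qI b p : qmul (apw b qI) p = apw b p.
Proof. by case: b; rewrite /apw ?qmulr1 ?qmul1. Qed.

Lemma wq_block (X : word) n : peq (wq X) qA -> peq (wq (flatten (nseq n X))) (apw (odd n) qI).
Proof.
move=> HX; elim: n => [|n IH]; first exact: peq_refl.
rewrite [flatten _]/= wq_cat.
apply: peq_trans (peq_mul HX IH) _.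
have -> : odd n.+1 = ~~ odd n by [].
case: (odd n).
- rewrite /apw qmulr1 qAA; right; by [].
- exact: peq_refl.
Qed.

Lemma wq_Delta k : peq (wq (Delta_pow k)) (apw (odd `|k|%N) qI).
Proof.
case: k => n.
- have -> : `|Posz n|%N = n by [].
  apply: wq_block; left; by [].
- have -> : `|Negz n|%N = n.+1 by [].
  apply: (wq_block (X := Delta_inv)); right; by [].
Qed.

Lemma esum_Delta k : esum (Delta_pow k) = 3 * k.
Proof.
have Hb : forall X n, esum (flatten (nseq n X)) = esum X *+ n.
  move=> X; elim=> [|n IH] //=; by rewrite esum_cat IH mulrS.
case: k => n.
- by rewrite /Delta_pow Hb /= -mulr_natr; lia.
- by rewrite /Delta_pow Hb /= NegzE -mulr_natr; lia.
Qed.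

Lemma valid_form s k w : beq s (Delta_pow k ++ w) -> peq (wq s) (apw (odd `|k|%N) (wq w)).
Proof.
move=> /beq_wq ->; rewrite wq_cat -apw_qI.
exact: peq_mul (wq_Delta k) (peq_refl _).
Qed.

Lemma ra_peq p p' : peq p p' -> ra (mxq p) = ra (mxq p') /\ rb (mxq p) = rb (mxq p').
Proof. by case=> ->; rewrite !ra_mxq !rb_mxq //= !ratioN. Qed.

Lemma valid_exists s : exists kw, rot_decomp s kw.
Proof.
have [k [w [H HPN]]] := decomp_ex s.
exists (k, w); split => //.
have [Era Erb] := ra_peq (valid_form H).
rewrite word_mxE Era Erb {Era Erb H}.
have D := qdet_wq w.
case: (PN_form HPN) => [[P [a [b [c [d [E [Ha Hb Hc Hd]]]]]]]|[P [a [b [c [d [E [Ha Hb Hc Hd]]]]]]]];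
  rewrite E /qdet /= in D; case: (boolP (odd `|k|%N)) => Hk;
  rewrite /apw E ra_mxq rb_mxq /qmul /qA /= ?mul0r ?mul1r ?mulN1r ?add0r ?addr0.
- apply: Or42; rewrite P andbT.
  rewrite (ratio_some (- b)); last lia.
  have [->|Hc0] := eqVneq c 0.
  + rewrite ratio0 /=; apply: le0_frac; lia.
  + rewrite ratio_some //=; apply/andP; split; [apply: lt_frac|apply: le0_frac]; nia.
- apply: Or41; rewrite P andbT.
  rewrite (ratio_some c); last lia.
  have [->|Hb0] := eqVneq b 0.
  + rewrite ratio0 /=; apply: ge0_frac; lia.
  + rewrite ratio_some //=; apply/andP; split; [apply: ge0_frac|apply: lt_frac]; nia.
- apply: Or43; rewrite P andbT /case3 opprK ratioN.
  rewrite (ratio_some b); last lia.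
  have [->|Hc0] := eqVneq c 0.
  + rewrite ratio0 /=; apply: ge0_frac; lia.
  + rewrite ratio_some //=; apply/andP; split; [apply: ge0_frac|apply: lt_frac]; nia.
- apply: Or44; rewrite P andbT /case4.
  rewrite (ratio_some (- c)); last lia.
  have [->|Hb0] := eqVneq b 0.
  + rewrite oppr0 ratio0 /=; apply: le0_frac; lia.
  + rewrite -[Defs.ratio d _]ratioN opprK ratio_some //=.
    apply/andP; split; [apply: lt_frac|apply: le0_frac]; nia.
Qed.


Definition Kof (s : word) : int := (epsilon (inhabits (0%:Z, [::])) (rot_decomp s)).1.

Lemma braid_rotE s : braid_rot s = (Kof s)%:~R / 4.
Proof. by []. Qed.

Lemma PhiK s g : psl_eq (word_mx s) g -> Phi g = esum s - 3 * Kof s.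
Proof.
move=> Hg.
have [kw0 Hkw0] := valid_exists s.
have Hspec := epsilon_spec (inhabits (0%:Z, [::])) (rot_decomp s) (ex_intro _ kw0 Hkw0).
rewrite /Kof; move: Hspec.
case: (epsilon _ (rot_decomp s)) => k w /= [Hb Hc].
have HPN : PN w.
  by rewrite /PN; case: Hc => /and3P [_ _ ->]; rewrite ?orbT.
have Hes : esum s = 3 * k + esum w by rewrite (beq_esum Hb) esum_cat esum_Delta.
have Hw := valid_form Hb.
set G := mkQ (g ord0 ord0) (g ord0 ord_max) (g ord_max ord0) (g ord_max ord_max).
have EG : g = mxq G := mxq_eta g.
have HsG : peq (wq s) G by apply/psl_peq; rewrite -word_mxE -EG.
have [r0 [Hr0 Hr0']] := nf_ex (odd `|k|%N) HPN.
have Hnf0 : is_nf g r0.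
  split => //; rewrite nf_mxE EG; apply/psl_peq.
  apply: peq_trans Hr0' _; apply: peq_trans (peq_sym Hw) HsG.
have := epsilon_spec (inhabits [::]) (is_nf g) (ex_intro _ r0 Hnf0).
rewrite /Phi; set r := epsilon _ _ => -[Hok Hr].
have [b [v [HPv [Hv Hsum]]]] := nf_form Hok.
rewrite Hsum.
have Hkey : peq (apw b (wq v)) (apw (odd `|k|%N) (wq w)).
  apply: peq_trans (peq_sym Hv) _.
  have Hr' : peq (nfq r) G by apply/psl_peq; rewrite -nf_mxE -EG.
  apply: peq_trans Hr' _; apply: peq_trans (peq_sym HsG) Hw.
rewrite (Key HPv HPN Hkey) Hes; ring.
Qed.

Lemma word_mx_cat u v : word_mx (u ++ v) = word_mx u *m word_mx v.
Proof. by rewrite !word_mxE wq_cat mxq_mul. Qed.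

Unset Implicit Arguments.

Theorem corollary3p1 (g1 g2 : 'M[int]_2) :
  \det g1 = 1 -> \det g2 = 1 ->
  forall t1 t2 : word, lifts t1 g1 -> lifts t2 g2 ->
  ((Phi g1 + Phi g2 - Phi (g1 *m g2))%:~R : rat)
    = - 12 * (braid_rot t1 + braid_rot t2 - braid_rot (t1 ++ t2)).
Proof.
move=> _ _ t1 t2 H1 H2.
have H12 : psl_eq (word_mx (t1 ++ t2)) (g1 *m g2).
  rewrite word_mx_cat; case: H1 => ->; case: H2 => ->;
    rewrite ?mulNmx ?mulmxN ?opprK; by [left|right].
rewrite (PhiK H1) (PhiK H2) (PhiK H12) !braid_rotE esum_cat.
have -> : esum t1 - 3 * Kof t1 + (esum t2 - 3 * Kof t2) - (esum t1 + esum t2 - 3 * Kof (t1 ++ t2))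
  = (-3) * (Kof t1 + Kof t2 - Kof (t1 ++ t2)) by ring.
rewrite intrM !intrD intrN /=. by field.
Qed.
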